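(* Let $(E,\rho_\theta)$ be a complete $b_v(\theta)$ metric space whose function $\theta$ is bounded, and let $S:E\to E$ satisfy $\rho_\theta(Su,Sw)\le\alpha\rho_\theta(u,w)+\beta\rho_\theta(u,Su)+\gamma\rho_\theta(w,Sw)$ for all $u,w\in E$, where $\alpha,\beta,\gamma\ge0$ are constants with $\alpha+\beta+\gamma<1$, and where $\Gamma_1<\frac1{\Gamma_2}$ with $\Gamma_1=\min\{\beta,\gamma\}$ and $\Gamma_2=\max\{\theta(u,Su),\theta(Su,u)\}$ (for all $u\in E$). Then $S$ has a unique fixed point. Moreover, for any $u_0\in E$, the sequence $\{u_n\}$ defined by $u_n=Su_{n-1}$ converges to the unique fixed point of $S$.
   Context: Let $E$ be a nonempty set, $\theta:E\times E\to[1,\infty)$ a function and $v\in\mathbb{N}$. A map $\rho_\theta:E\times E\to[0,\infty)$ is a $b_v(\theta)$ metric (and $(E,\rho_\theta)$ a $b_v(\theta)$ metric space) if for all $u,w\in E$: $\rho_\theta(u,w)=0$ iff $u=w$; $\rho_\theta(u,w)=\rho_\theta(w,u)$; and for all $u,z_1,\dots,z_v,w\in E$ pairwise distinct, $\rho_\theta(u,w)\le\theta(u,w)[\rho_\theta(u,z_1)+\rho_\theta(z_1,z_2)+\dots+\rho_\theta(z_{v-1},z_v)+\rho_\theta(z_v,w)]$. A sequence $\{u_n\}$ converges to $u$ if for every $\varepsilon>0$ there is $n_0$ with $\rho_\theta(u_n,u)<\varepsilon$ for all $n\ge n_0$; it is Cauchy if for every $\varepsilon>0$ there is $n_0$ with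 $\rho_\theta(u_n,u_{n+p})<\varepsilon$ for all $n\ge n_0$ and $p>0$; the space is complete if every Cauchy sequence converges in $E$. *)

(* Defs.v *)
From Stdlib Require Import Reals List.
Import ListNotations.
Open Scope R_scope.

Section BvMetric.
Variable E : Type.

Fixpoint path_len (rho : E -> E -> R) (l : list E) : R :=
  match l with
  | x :: ((y :: _) as l') => rho x y + path_len rho l'
  | _ => 0
  end.

Definition bv_metric (v : nat) (theta rho : E -> E -> R) : Prop :=
  (forall u w, 1 <= theta u w) /\
  (forall u w, 0 <= rho u w) /\
  (forall u w, rho u w = 0 <-> u = w) /\
  (forall u w, rho u w = rho w u) /\
  (forall (u w : E) (zs : list E), length zs = v ->
      NoDup (u :: zs ++ [w]) ->
      rho u w <= theta u w * path_len rho (u :: zs ++ [w])).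

Definition converges (rho : E -> E -> R) (x : nat -> E) (u : E) : Prop :=
  forall eps, 0 < eps -> exists n0, forall n, (n0 <= n)%nat -> rho (x n) u < eps.

Definition cauchy (rho : E -> E -> R) (x : nat -> E) : Prop :=
  forall eps, 0 < eps -> exists n0, forall n p, (n0 <= n)%nat -> (0 < p)%nat ->
    rho (x n) (x (n + p)%nat) < eps.

Definition complete (rho : E -> E -> R) : Prop :=
  forall x : nat -> E, cauchy rho x -> exists u, converges rho x u.
End BvMetric.

Arguments path_len {E}.
Arguments bv_metric {E}.
Arguments converges {E}.
Arguments cauchy {E}.
Arguments complete {E}.

(* Main.v *)
Require Import Defs.
From Stdlib Require Import Reals List Lra Lia Classical.
Import ListNotations.
Open Scope R_scope.

Lemma pl_cons2 {E} (rho : E -> E -> R) x y l :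
  path_len rho (x :: y :: l) = rho x y + path_len rho (y :: l).
Proof. reflexivity. Qed.

Lemma pl_nonneg {E} (rho : E -> E -> R) (l : list E) :
  (forall x y, 0 <= rho x y) -> 0 <= path_len rho l.
Proof.
  intros H. induction l as [|x l IH]; [simpl; lra|].
  destruct l as [|y l]; [simpl; lra|]. rewrite pl_cons2. specialize (H x y). lra.
Qed.

Lemma pl_bound {E} (rho : E -> E -> R) (u : nat -> E) x w eps m : forall a,
  (forall i, (i < m)%nat -> rho (u (a+i)%nat) (u (S (a+i)))  <= eps) ->
  path_len rho (x :: map u (seq a (S m)) ++ [w]) <= rho x (u a) + INR m * eps + rho (u (a+m)%nat) w.
Proof.
  revert x. induction m as [|m IH]; intros x a H.
  - simpl. rewrite Nat.add_0_r. lra.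
  - change (x :: map u (seq a (S (S m))) ++ [w]) with (x :: u a :: (map u (seq (S a) (S m)) ++ [w])).
    rewrite pl_cons2. pose proof (IH (u a) (S a)) as IH'.
    assert (H0 := H 0%nat ltac:(lia)). rewrite Nat.add_0_r in H0.
    replace (S a + m)%nat with (a + S m)%nat in IH' by lia.
    assert (IH'' : path_len rho (u a :: map u (seq (S a) (S m)) ++ [w]) <=
       rho (u a) (u (S a)) + INR m * eps + rho (u (a + S m)%nat) w).
    { apply IH'. intros i Hi. replace (S a + i)%nat with (a + S i)%nat by lia. apply H. lia. }
    rewrite S_INR. lra.
Qed.

Lemma nodup_path {E} (u : nat -> E) x w m : forall a,
  (forall i j, i <> j -> u i <> u j) -> x <> w ->
  (forall i, (a <= i < a + m)%nat -> u i <> x) ->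
  (forall i, (a <= i < a + m)%nat -> u i <> w) ->
  NoDup (x :: map u (seq a m) ++ [w]).
Proof.
  intros a Hinj Hxw Hx Hw. constructor.
  - intros Hin. apply in_app_iff in Hin as [Hin|Hin].
    + apply in_map_iff in Hin as [i [Hi Hin]]. apply in_seq in Hin. exact (Hx i Hin Hi).
    + destruct Hin as [Hin|[]]. exact (Hxw (eq_sym Hin)).
  - clear Hx Hxw. revert a Hw. induction m as [|m IH]; intros a Hw.
    + simpl. constructor; [intros []|constructor].
    + simpl. constructor.
      * intros Hin. apply in_app_iff in Hin as [Hin|Hin].
        -- apply in_map_iff in Hin as [i [Hi Hin]]. apply in_seq in Hin.
           apply (Hinj a i); [lia|congruence].
        -- destruct Hin as [Hin|[]]. apply (Hw a); [lia|auto].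
      * apply IH. intros i Hi. apply Hw. lia.
Qed.

Fixpoint maxUpTo (f : nat -> R) (n : nat) : R :=
  match n with 0%nat => f 0%nat | S n' => Rmax (maxUpTo f n') (f n) end.

Lemma maxUpTo_ge f n q : (q <= n)%nat -> f q <= maxUpTo f n.
Proof.
  induction n as [|n IH]; intros Hq.
  - replace q with 0%nat by lia. simpl. lra.
  - simpl. destruct (Nat.eq_dec q (S n)) as [->|Hne]; [apply Rmax_r|].
    eapply Rle_trans; [apply IH; lia|apply Rmax_l].
Qed.

Lemma small_le0 a c : 0 < c -> (forall eps, 0 < eps -> a <= c * eps) -> a <= 0.
Proof.
  intros Hc H. destruct (Rle_dec a 0) as [|Ha]; [auto|].
  assert (Ha' : 0 < a) by lra. specialize (H (a / (2 * c))).
  assert (0 < a / (2*c)) by (apply Rdiv_lt_0_compat; lra).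
  specialize (H H0). replace (c * (a / (2 * c))) with (a/2) in H by (field; lra). lra.
Qed.


Theorem mainTheorem11 (E : Type) (v : nat) (theta rho : E -> E -> R)
  (S : E -> E) (alpha beta gamma : R) :
  inhabited E -> (0 < v)%nat ->
  bv_metric v theta rho ->
  complete rho ->
  (exists M : R, forall u w, theta u w <= M) ->
  0 <= alpha -> 0 <= beta -> 0 <= gamma -> alpha + beta + gamma < 1 ->
  (forall u w, rho (S u) (S w) <= alpha * rho u w + beta * rho u (S u) + gamma * rho w (S w)) ->
  (forall u, Rmin beta gamma < 1 / Rmax (theta u (S u)) (theta (S u) u)) ->
  exists x : E, S x = x /\ (forall y, S y = y -> y = x) /\
    (forall u0 : E, converges rho (fun n => Nat.iter n S u0) x).
Proof.
  intros [e0] Hv [Hth [Hpos [Hzero [Hsym Hpoly]]]] Hcomp [M HM] Ha Hb Hg Habg Hcon Hgam.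
  set (g := Rmin beta gamma). set (h := Rmax beta gamma).
  assert (Hg0 : 0 <= g) by (unfold g; apply Rmin_glb; lra).
  assert (Hh0 : 0 <= h) by (unfold h; eapply Rle_trans; [apply Hb|apply Rmax_l]).
  assert (Hcon2 : forall u w, rho (S u) (S w) <= alpha * rho u w + h * rho u (S u) + g * rho w (S w)).
  { intros u w. unfold g, h. destruct (Rle_dec beta gamma).
    - rewrite Rmin_left, Rmax_right by lra. rewrite (Hsym (S u)), (Hsym u w).
      specialize (Hcon w u). lra.
    - rewrite Rmin_right, Rmax_left by lra. apply Hcon. }
  assert (HM1 : 1 <= M) by (eapply Rle_trans; [apply (Hth e0 e0)|apply HM]).
  assert (Huniq : forall y z, S y = y -> S z = z -> y = z).
  { intros y z Hy Hz. apply Hzero. specialize (Hcon y z). rewrite Hy, Hz in Hcon.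
    rewrite (proj2 (Hzero y y) eq_refl), (proj2 (Hzero z z) eq_refl) in Hcon.
    specialize (Hpos y z). nra. }
  assert (HA : forall u0, exists x, S x = x /\ converges rho (fun n => Nat.iter n S u0) x).
  { intros u0. set (u := fun n => Nat.iter n S u0).
    assert (Hu : forall n, u (Datatypes.S n) = S (u n)) by reflexivity.
    clearbody u.
    set (d := fun n => rho (u n) (u (Datatypes.S n))).
    assert (Hd0 : forall n, 0 <= d n) by (intros; apply Hpos).
    set (k := (alpha + beta) / (1 - gamma)).
    assert (Hk0 : 0 <= k) by (unfold k; apply Rmult_le_pos; [lra|left; apply Rinv_0_lt_compat; lra]).
    assert (Hk1 : k < 1).
    { unfold k. apply (Rmult_lt_reg_r (1 - gamma)); [lra|].
      replace ((alpha + beta) / (1 - gamma) * (1 - gamma)) with (alpha + beta) by (field; lra). lra. }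
    assert (Hd : forall n, d (Datatypes.S n) <= k * d n).
    { intros n. assert (H1 := Hcon (u n) (u (Datatypes.S n))).
      rewrite <- !Hu in H1. fold (d n) in H1. fold (d (Datatypes.S n)) in H1.
      assert (H2 : (1 - gamma) * d (Datatypes.S n) <= (alpha + beta) * d n) by lra.
      apply (Rmult_le_reg_l (1 - gamma)); [lra|].
      replace ((1 - gamma) * (k * d n)) with ((alpha + beta) * d n) by (unfold k; field; lra). lra. }
    assert (Hmono : forall t i, d (i + t)%nat <= d i).
    { induction t as [|t IH]; intros i; [rewrite Nat.add_0_r; lra|].
      rewrite Nat.add_succ_r. specialize (Hd (i + t)%nat). specialize (IH i).
      specialize (Hd0 (i+t)%nat). nra. }
    assert (Hdk : forall n, d n <= k ^ n * d 0%nat).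
    { induction n as [|n IH]; [simpl; lra|]. simpl.
      specialize (Hd n). assert (k * d n <= k * (k ^ n * d 0%nat)) by (apply Rmult_le_compat_l; lra). lra. }
    destruct (classic (exists i j, (i < j)%nat /\ u i = u j)) as [[i [j [Hij Heq]]]|Hnd].
    - assert (Hdij : d j = d i) by (unfold d; rewrite !Hu, Heq; reflexivity).
      assert (Hdi : d i <= k * d i).
      { replace j with (Datatypes.S (i + (j - Datatypes.S i))) in Hdij by lia.
        rewrite <- Hdij at 1. eapply Rle_trans; [apply Hd|]. apply Rmult_le_compat_l; [lra|apply Hmono]. }
      assert (Hdi0 : d i = 0) by (specialize (Hd0 i); nra).
      assert (Hfix : S (u i) = u i).
      { rewrite <- Hu. symmetry. apply Hzero. exact Hdi0. }
      exists (u i). split; [exact Hfix|].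
      assert (Hconst : forall t, u (i + t)%nat = u i).
      { induction t as [|t IH]; [rewrite Nat.add_0_r; reflexivity|].
        rewrite Nat.add_succ_r, Hu, IH. exact Hfix. }
      intros eps Heps. exists i. intros n Hn. simpl.
      replace n with (i + (n - i))%nat by lia. rewrite Hconst.
      rewrite (proj2 (Hzero _ _) eq_refl). exact Heps.
    - assert (Hinj : forall i j, i <> j -> u i <> u j).
      { intros i j Hij Heq. apply Hnd. destruct (Nat.lt_ge_cases i j).
        - exists i, j. split; auto.
        - exists j, i. split; [lia|auto]. }
      clear Hnd.
      destruct v as [|v']; [lia|].
      assert (Hdle0 : forall n, d n <= d 0%nat) by (intros n; exact (Hmono n 0%nat)).
      set (C := (beta + gamma) * d 0%nat / (1 - alpha)).
      assert (HC0 : 0 <= C) by (unfold C; apply Rmult_le_pos; [specialize (Hd0 0%nat); nra|left; apply Rinv_0_lt_compat; lra]).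
      assert (HCe : alpha * C + (beta + gamma) * d 0%nat = C) by (unfold C; field; lra).
      assert (HC : forall t a b, rho (u (a+t)%nat) (u (b+t)%nat) <= alpha^t * rho (u a) (u b) + C).
      { induction t as [|t IH]; intros a b.
        - rewrite !Nat.add_0_r. simpl. lra.
        - rewrite !Nat.add_succ_r, !Hu.
          assert (H1 := Hcon (u (a+t)%nat) (u (b+t)%nat)).
          assert (H2 := IH a b).
          assert (H3 : rho (u (a+t)%nat) (S (u (a+t)%nat)) <= d 0%nat) by (rewrite <- Hu; apply Hdle0).
          assert (H4 : rho (u (b+t)%nat) (S (u (b+t)%nat)) <= d 0%nat) by (rewrite <- Hu; apply Hdle0).
          assert (alpha * rho (u (a + t)%nat) (u (b + t)%nat) <= alpha * (alpha ^ t * rho (u a) (u b) + C)) by (apply Rmult_le_compat_l; lra).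
          assert (beta * rho (u (a + t)%nat) (S (u (a + t)%nat)) <= beta * d 0%nat) by (apply Rmult_le_compat_l; lra).
          assert (gamma * rho (u (b + t)%nat) (S (u (b + t)%nat)) <= gamma * d 0%nat) by (apply Rmult_le_compat_l; lra).
          simpl pow. lra. }
      assert (HM0 : 0 < 2 * M) by lra.
      destruct (pow_lt_1_zero alpha ltac:(rewrite Rabs_pos_eq; lra) (1 / (2 * M)) ltac:(apply Rdiv_lt_0_compat; lra)) as [N HN].
      set (m := Datatypes.S N).
      assert (HNm : M * alpha ^ m < / 2).
      { assert (H1 := HN m ltac:(unfold m; lia)). rewrite Rabs_pos_eq in H1 by (apply pow_le; lra).
        apply (Rmult_lt_compat_l M) in H1; [|lra].
        replace (M * (1 / (2 * M))) with (/2) in H1 by (field; lra). exact H1. }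
      set (D := fun p => rho (u 0%nat) (u p)).
      assert (HD0 : forall p, 0 <= D p) by (intros; apply Hpos).
      set (A := rho (u 0%nat) (u m) + INR v' * d 0%nat + C).
      assert (Hrec : forall p, (m + v' < p)%nat -> D p <= M * A + / 2 * D (p - (m + v'))%nat).
      { intros p Hp.
        assert (Hl : length (map u (seq m (Datatypes.S v'))) = Datatypes.S v') by (rewrite length_map, length_seq; reflexivity).
        assert (Hnd : NoDup (u 0%nat :: map u (seq m (Datatypes.S v')) ++ [u p])).
        { apply nodup_path; [exact Hinj| apply Hinj; lia | intros i Hi; apply Hinj; unfold m in *; lia | intros i Hi; apply Hinj; lia]. }
        assert (H1 := Hpoly (u 0%nat) (u p) _ Hl Hnd).
        assert (H2 := pl_bound rho u (u 0%nat) (u p) (d 0%nat) v' m ltac:(intros i _; apply (Hdle0 (m+i)%nat))).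
        assert (H3 := HC (m+v')%nat 0%nat (p - (m+v'))%nat).
        replace (p - (m+v') + (m+v'))%nat with p in H3 by lia. rewrite Nat.add_0_l in H3.
        assert (H4 : alpha ^ (m + v') * D (p - (m + v'))%nat <= alpha ^ m * D (p - (m + v'))%nat).
        { apply Rmult_le_compat_r; [apply HD0|]. rewrite pow_add.
          assert (alpha ^ v' <= 1) by (rewrite <- (pow1 v'); apply pow_incr; lra).
          assert (0 <= alpha ^ m) by (apply pow_le; lra). nra. }
        assert (H5 := pl_nonneg rho (u 0%nat :: map u (seq m (Datatypes.S v')) ++ [u p]) Hpos).
        assert (H6 := HM (u 0%nat) (u p)).
        set (PL := path_len rho (u 0%nat :: map u (seq m (Datatypes.S v')) ++ [u p])) in *.
        assert (theta (u 0%nat) (u p) * PL <= M * PL) by (apply Rmult_le_compat_r; lra).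
        assert (M * PL <= M * (rho (u 0%nat) (u m) + INR v' * d 0%nat + (alpha ^ m * D (p - (m + v'))%nat + C))).
        { apply Rmult_le_compat_l; [lra|]. fold (D (p - (m+v'))%nat) in H3. lra. }
        assert (M * (alpha ^ m * D (p - (m + v'))%nat) <= / 2 * D (p - (m + v'))%nat).
        { rewrite <- Rmult_assoc. apply Rmult_le_compat_r; [apply HD0|lra]. }
        unfold A. fold (D p) in H1. lra. }
      set (B := Rmax (2 * M * A) (maxUpTo D (m + v'))).
      assert (HB : forall p, D p <= B).
      { assert (Hn : forall n p, (p <= n)%nat -> D p <= B).
        { induction n as [|n IH]; intros p Hp.
          - eapply Rle_trans; [apply (maxUpTo_ge D (m+v')); lia|apply Rmax_r].
          - destruct (Nat.le_gt_cases p n) as [Hpn|Hpn]; [apply IH; lia|].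
            destruct (Nat.le_gt_cases p (m + v')) as [Hpm|Hpm].
            + eapply Rle_trans; [apply (maxUpTo_ge D (m+v')); lia|apply Rmax_r].
            + eapply Rle_trans; [apply Hrec; lia|].
              assert (D (p - (m + v'))%nat <= B) by (apply IH; unfold m in *; lia).
              assert (2 * M * A <= B) by apply Rmax_l. lra. }
        intros p. apply (Hn p). lia. }
      set (r := (1 + Rmax alpha k) / 2).
      assert (Hmx : Rmax alpha k < 1) by (apply Rmax_lub_lt; lra).
      assert (Har : alpha < r) by (unfold r; assert (alpha <= Rmax alpha k) by apply Rmax_l; lra).
      assert (Hkr : k < r) by (unfold r; assert (k <= Rmax alpha k) by apply Rmax_r; lra).
      assert (Hr1 : r < 1) by (unfold r; lra).
      assert (Hr0 : 0 <= r) by lra.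
      set (X := (beta + gamma) * d 0%nat / (r - alpha)).
      assert (HX0 : 0 <= X) by (unfold X; apply Rmult_le_pos; [specialize (Hd0 0%nat); nra|left; apply Rinv_0_lt_compat; lra]).
      set (K := Rmax B X).
      assert (HK0 : 0 <= K) by (eapply Rle_trans; [apply HX0|apply Rmax_r]).
      assert (HKX : (beta + gamma) * d 0%nat <= K * (r - alpha)).
      { assert (X <= K) by apply Rmax_r.
        replace ((beta + gamma) * d 0%nat) with (X * (r - alpha)) by (unfold X; field; lra).
        apply Rmult_le_compat_r; lra. }
      assert (Hgeo : forall n p, rho (u n) (u (n + p)%nat) <= K * r ^ n).
      { induction n as [|n IH]; intros p.
        - simpl. rewrite Rmult_1_r. eapply Rle_trans; [apply (HB p)|apply Rmax_l].
        - change (Datatypes.S n + p)%nat with (Datatypes.S (n + p)). rewrite !Hu.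
          assert (H1 := Hcon (u n) (u (n+p)%nat)). assert (H2 := IH p).
          assert (Hrn : 0 <= r ^ n) by (apply pow_le; lra).
          assert (H3' : d n <= r ^ n * d 0%nat).
          { eapply Rle_trans; [apply Hdk|]. apply Rmult_le_compat_r; [apply Hd0|]. apply pow_incr; lra. }
          assert (H3 : rho (u n) (S (u n)) <= r ^ n * d 0%nat) by (rewrite <- Hu; exact H3').
          assert (H4 : rho (u (n+p)%nat) (S (u (n+p)%nat)) <= rho (u n) (S (u n))) by (rewrite <- !Hu; apply Hmono).
          assert (alpha * rho (u n) (u (n + p)%nat) <= alpha * (K * r ^ n)) by (apply Rmult_le_compat_l; lra).
          assert (beta * rho (u n) (S (u n)) <= beta * (r ^ n * d 0%nat)) by (apply Rmult_le_compat_l; lra).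
          assert (gamma * rho (u (n + p)%nat) (S (u (n + p)%nat)) <= gamma * (r ^ n * d 0%nat)) by (apply Rmult_le_compat_l; lra).
          assert (r ^ n * ((beta + gamma) * d 0%nat) <= r ^ n * (K * (r - alpha))) by (apply Rmult_le_compat_l; lra).
          simpl pow. lra. }
      assert (Hcau : cauchy rho u).
      { intros eps Heps.
        assert (HKe : 0 < eps / (K + 1)) by (apply Rdiv_lt_0_compat; lra).
        destruct (pow_lt_1_zero r ltac:(rewrite Rabs_pos_eq; lra) _ HKe) as [N1 HN1].
        exists N1. intros n p Hn Hp. assert (H1 := HN1 n Hn).
        rewrite Rabs_pos_eq in H1 by (apply pow_le; lra).
        eapply Rle_lt_trans; [apply Hgeo|].
        assert (K * r ^ n <= K * (eps / (K + 1))) by (apply Rmult_le_compat_l; lra).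
        assert (K * (eps / (K + 1)) = eps - eps / (K + 1)) by (field; lra). lra. }
      destruct (Hcomp u Hcau) as [x Hx].
      exists x. split; [|exact Hx].
      destruct (classic (S x = x)) as [|Hne]; [auto|exfalso].
      assert (HNx : forall y, exists N, forall i, (N <= i)%nat -> u i <> y).
      { intros y. destruct (classic (exists i, u i = y)) as [[i0 Hi0]|Hno].
        - exists (Datatypes.S i0). intros i Hi Heq. apply (Hinj i i0); [lia|congruence].
        - exists 0%nat. intros i _ Heq. apply Hno. eauto. }
      destruct (HNx x) as [N1 HN1]. destruct (HNx (S x)) as [N2 HN2].
      set (T := theta x (S x)).
      assert (HT1 : 1 <= T) by apply Hth.
      assert (HTg : g * T < 1).
      { assert (Hm := Hgam x). fold g in Hm. fold T in Hm.
        set (R0 := Rmax T (theta (S x) x)) in *.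
        assert (T <= R0) by apply Rmax_l.
        assert (g * T <= g * R0) by (apply Rmult_le_compat_l; lra).
        assert (g * R0 < 1 / R0 * R0) by (apply Rmult_lt_compat_r; lra).
        replace (1 / R0 * R0) with 1 in * by (field; lra). lra. }
      set (c := 1 + INR v' + alpha + h).
      assert (Hc : 0 < c) by (unfold c; assert (0 <= INR v') by apply pos_INR; lra).
      assert (Key : forall eps, 0 < eps -> (1 - g * T) * rho x (S x) <= (T * c) * eps).
      { intros eps Heps. destruct (Hx eps Heps) as [n1 Hn1]. destruct (Hcau eps Heps) as [n2 Hn2].
        set (n := (N1 + N2 + n1 + n2)%nat).
        assert (Hl : length (map u (seq (Datatypes.S n) (Datatypes.S v'))) = Datatypes.S v') by (rewrite length_map, length_seq; reflexivity).
        assert (Hnd : NoDup (x :: map u (seq (Datatypes.S n) (Datatypes.S v')) ++ [S x])).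
        { apply nodup_path; [exact Hinj| intros E'; apply Hne; auto | intros i Hi; apply HN1; unfold n in *; lia | intros i Hi; apply HN2; unfold n in *; lia]. }
        assert (H1 := Hpoly x (S x) _ Hl Hnd). fold T in H1.
        assert (Hdn : forall j, (n2 <= j)%nat -> rho (u j) (S (u j)) < eps).
        { intros j Hj. rewrite <- Hu. rewrite <- Nat.add_1_r. apply Hn2; lia. }
        assert (H2 := pl_bound rho u x (S x) eps v' (Datatypes.S n) ltac:(intros i _; rewrite Hu; left; apply Hdn; unfold n; lia)).
        assert (H3 : rho x (u (Datatypes.S n)) < eps) by (rewrite Hsym; apply Hn1; unfold n; lia).
        change (Datatypes.S n + v')%nat with (Datatypes.S (n + v')) in H2. rewrite (Hu (n + v')%nat) in H2.
        assert (H4 := Hcon2 (u (n + v')%nat) x).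
        assert (H5 : rho (u (n + v')%nat) x < eps) by (apply Hn1; unfold n; lia).
        assert (H6 : rho (u (n + v')%nat) (S (u (n + v')%nat)) < eps) by (apply Hdn; unfold n; lia).
        assert (alpha * rho (u (n + v')%nat) x <= alpha * eps) by (apply Rmult_le_compat_l; lra).
        assert (h * rho (u (n + v')%nat) (S (u (n + v')%nat)) <= h * eps) by (apply Rmult_le_compat_l; lra).
        set (PL := path_len rho (x :: map u (seq (Datatypes.S n) (Datatypes.S v')) ++ [S x])) in *.
        assert (T * PL <= T * (c * eps + g * rho x (S x))).
        { apply Rmult_le_compat_l; [lra|]. unfold c. lra. }
        lra. }
      assert (Hle := small_le0 ((1 - g * T) * rho x (S x)) (T * c) ltac:(apply Rmult_lt_0_compat; lra) Key).
      assert (H0 := Hpos x (S x)).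
      assert (Hz : rho x (S x) = 0) by nra.
      apply Hne. symmetry. apply Hzero. exact Hz.

  }
  destruct (HA e0) as [x [Hx _]]. exists x. split; [exact Hx|split].
  - intros y Hy. apply Huniq; auto.
  - intros u0. destruct (HA u0) as [x' [Hx' Hc]].
    rewrite (Huniq x x' Hx Hx'). exact Hc.
Qed.
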